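(* Let $0<\alpha\le\delta<\infty$ and $0<\gamma<\tfrac13$. The map $\mathcal R^a_1(a)_k=\frac{1}{k+1}\sum_{n=0}^ka_na_{k-n}$ ($k\in\mathbb N_0$) maps $X_{\alpha,\delta}$ into itself and is continuous with respect to the metric $d(a,b)=\sum_{k\ge0}(\gamma/\delta)^k|a_k-b_k|$.
   Context: $X_{\alpha,\delta}$ is the set of real sequences $a=(a_k)_{k\ge0}$ with $a_0=1$, $a_1=\alpha$, $0\le a_k\le\delta^k$ for $k\ge2$. *)

(* Defs.v *)
From Stdlib Require Import Reals.
From Coquelicot Require Import Coquelicot.
Open Scope R_scope.

Definition X (alpha delta : R) (a : nat -> R) : Prop :=
  a 0%nat = 1 /\ a 1%nat = alpha /\
  forall k : nat, (2 <= k)%nat -> 0 <= a k /\ a k <= delta ^ k.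

Definition Ra1 (a : nat -> R) : nat -> R :=
  fun k => / (INR k + 1) * sum_f_R0 (fun n => a n * a (k - n)%nat) k.

Definition dist_gd (gamma delta : R) (a b : nat -> R) : R :=
  Series (fun k => (gamma / delta) ^ k * Rabs (a k - b k)).

(* Main.v *)
Require Import Defs.
From Stdlib Require Import Reals Lra Lia.
From Coquelicot Require Import Coquelicot.
Open Scope R_scope.

Lemma X_bound alpha delta a : 0 < alpha -> alpha <= delta -> X alpha delta a ->
  forall k, 0 <= a k <= delta ^ k.
Proof.
  intros Ha Had [H0 [H1 H2]] k.
  destruct k as [|[|k]].
  - rewrite H0; simpl; lra.
  - rewrite H1; simpl; lra.
  - apply H2; lia.
Qed.

Lemma abs_diff_le x y M : 0 <= x <= M -> 0 <= y <= M -> Rabs (x - y) <= M.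
Proof. intros. unfold Rabs; destruct Rcase_abs; lra. Qed.

Lemma qd_pow gamma delta j : 0 < delta -> (gamma / delta) ^ j * delta ^ j = gamma ^ j.
Proof.
  intros. rewrite <- Rpow_mult_distr. f_equal. field. lra.
Qed.

Lemma ex_dist alpha delta gamma a b : 0 < alpha -> alpha <= delta -> 0 < gamma -> gamma < 1 ->
  X alpha delta a -> X alpha delta b ->
  ex_series (fun k => (gamma / delta) ^ k * Rabs (a k - b k)).
Proof.
  intros Ha Had Hg Hg1 Xa Xb.
  apply (@ex_series_le R_AbsRing R_CompleteNormedModule) with (b := fun k => gamma ^ k).
  - intro k. change (Rabs ((gamma/delta)^k * Rabs (a k - b k)) <= gamma ^ k).
    assert (Hq : 0 <= (gamma/delta)^k) by (apply pow_le; apply Rlt_le; apply Rdiv_lt_0_compat; lra).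
    rewrite Rabs_pos_eq by (apply Rmult_le_pos; [exact Hq| apply Rabs_pos]).
    rewrite <- (qd_pow gamma delta k) by lra.
    apply Rmult_le_compat_l; [exact Hq|].
    apply abs_diff_le; [exact (X_bound _ _ _ Ha Had Xa k)|exact (X_bound _ _ _ Ha Had Xb k)].
  - apply ex_series_geom. rewrite Rabs_pos_eq; lra.
Qed.

Lemma partial_le c N : (forall k, 0 <= c k) -> ex_series c -> sum_f_R0 c N <= Series c.
Proof.
  intros Hc Hex.
  apply Series_correct in Hex.
  assert (Hl : is_lim_seq (sum_n c) (Series c)) by exact Hex.
  apply (is_lim_seq_incr_n _ N) in Hl.
  assert (Hm : forall n, sum_f_R0 c N <= sum_n c (n + N)).
  { intro n; rewrite sum_n_Reals; induction n as [|n IH]; simpl; [lra|].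
    specialize (Hc (S (n+N))). lra. }
  assert (H := is_lim_seq_le (fun _ => sum_f_R0 c N) (fun n => sum_n c (n + N)) _ _
    Hm (is_lim_seq_const _) Hl).
  simpl in H. exact H.
Qed.

Lemma cauchy_le An Bn N : (forall n, 0 <= An n) -> (forall n, 0 <= Bn n) ->
  sum_f_R0 (fun k => sum_f_R0 (fun p => An p * Bn (k - p)%nat) k) N <=
  sum_f_R0 An N * sum_f_R0 Bn N.
Proof.
  intros HA HB. destruct N as [|N].
  - simpl. lra.
  - rewrite cauchy_finite by lia.
    assert (0 <= sum_f_R0
         (fun k : nat =>
          sum_f_R0 (fun l : nat => An (S (l + k)) * Bn (S N - l)%nat)
            (Init.Nat.pred (S N - k))) (Init.Nat.pred (S N))).
    { apply cond_pos_sum; intro k; apply cond_pos_sum; intro l.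
      apply Rmult_le_pos; auto. }
    lra.
Qed.

Lemma term_bound alpha delta gamma a b k n : 0 < alpha -> alpha <= delta -> 0 < gamma ->
  X alpha delta a -> X alpha delta b -> (n <= k)%nat ->
  Rabs (a n * a (k - n)%nat - b n * b (k - n)%nat) * (gamma / delta) ^ k <=
  ((gamma/delta)^n * Rabs (a n - b n)) * gamma ^ (k - n) +
  gamma ^ n * ((gamma/delta)^(k-n) * Rabs (a (k-n)%nat - b (k-n)%nat)).
Proof.
  intros Ha Had Hg Xa Xb Hnk.
  set (m := (k - n)%nat).
  replace k with (n + m)%nat by (unfold m; lia).
  rewrite pow_add.
  assert (Hd : 0 < delta) by lra.
  pose proof (X_bound _ _ _ Ha Had Xa n) as An.
  pose proof (X_bound _ _ _ Ha Had Xa m) as Am.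
  pose proof (X_bound _ _ _ Ha Had Xb n) as Bn.
  pose proof (X_bound _ _ _ Ha Had Xb m) as Bm.
  assert (Qn : 0 <= (gamma/delta)^n) by (apply pow_le; apply Rlt_le; apply Rdiv_lt_0_compat; lra).
  assert (Qm : 0 <= (gamma/delta)^m) by (apply pow_le; apply Rlt_le; apply Rdiv_lt_0_compat; lra).
  rewrite <- (qd_pow gamma delta n Hd), <- (qd_pow gamma delta m Hd).
  replace (a n * a m - b n * b m) with ((a n - b n) * a m + b n * (a m - b m)) by ring.
  assert (H1 : Rabs ((a n - b n) * a m + b n * (a m - b m)) <=
     Rabs (a n - b n) * delta ^ m + delta ^ n * Rabs (a m - b m)).
  { eapply Rle_trans; [apply Rabs_triang|].
    rewrite !Rabs_mult, (Rabs_pos_eq (a m)), (Rabs_pos_eq (b n)) by lra.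
    apply Rplus_le_compat.
    - apply Rmult_le_compat_l; [apply Rabs_pos| lra].
    - apply Rmult_le_compat_r; [apply Rabs_pos| lra]. }
  assert (H2 := Rmult_le_compat_r ((gamma/delta)^n * (gamma/delta)^m) _ _
     ltac:(apply Rmult_le_pos; assumption) H1).
  eapply Rle_trans; [exact H2|]. right; ring.
Qed.

Lemma Ra_term_bound alpha delta gamma a b k : 0 < alpha -> alpha <= delta -> 0 < gamma ->
  X alpha delta a -> X alpha delta b ->
  (gamma / delta) ^ k * Rabs (Ra1 a k - Ra1 b k) <=
  sum_f_R0 (fun n => ((gamma/delta)^n * Rabs (a n - b n)) * gamma ^ (k - n)) k +
  sum_f_R0 (fun n => gamma ^ n * ((gamma/delta)^(k-n) * Rabs (a (k-n)%nat - b (k-n)%nat))) k.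
Proof.
  intros Ha Had Hg Xa Xb.
  assert (Qk : 0 <= (gamma/delta)^k) by (apply pow_le; apply Rlt_le; apply Rdiv_lt_0_compat; lra).
  unfold Ra1. rewrite <- Rmult_minus_distr_l, <- minus_sum, Rabs_mult.
  rewrite <- plus_sum.
  assert (Hi : 0 < / (INR k + 1)) by (apply Rinv_0_lt_compat; pose proof (pos_INR k); lra).
  assert (Hi1 : / (INR k + 1) <= 1).
  { rewrite <- Rinv_1. apply Rinv_le_contravar; [lra|]. pose proof (pos_INR k); lra. }
  rewrite Rabs_pos_eq by lra.
  set (S := sum_f_R0 _ k).
  assert (HS : Rabs S <= sum_f_R0 (fun l => Rabs (a l * a (k - l)%nat - b l * b (k - l)%nat)) k)
    by apply Rsum_abs.
  apply Rle_trans with ((gamma/delta)^k * sum_f_R0 (fun l => Rabs (a l * a (k - l)%nat - b l * b (k - l)%nat)) k).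
  { apply Rmult_le_compat_l; [exact Qk|].
    pose proof (Rabs_pos S).
    apply Rle_trans with (Rabs S); [|exact HS].
    rewrite <- (Rmult_1_l (Rabs S)) at 2. apply Rmult_le_compat_r; lra. }
  rewrite scal_sum. apply sum_Rle. intros n Hn.
  exact (term_bound alpha delta gamma a b k n Ha Had Hg Xa Xb Hn).
Qed.

Lemma dist_Ra_bound alpha delta gamma a b : 0 < alpha -> alpha <= delta -> 0 < gamma -> gamma < 1 ->
  X alpha delta a -> X alpha delta b -> X alpha delta (Ra1 a) -> X alpha delta (Ra1 b) ->
  dist_gd gamma delta (Ra1 a) (Ra1 b) <= 2 * dist_gd gamma delta a b * (1 / (1 - gamma)).
Proof.
  intros Ha Had Hg Hg1 Xa Xb XRa XRb.
  assert (Hd : 0 < delta) by lra.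
  set (c := fun k => (gamma / delta) ^ k * Rabs (a k - b k)).
  set (g := fun k => gamma ^ k).
  assert (Hc : forall k, 0 <= c k).
  { intro k; unfold c; apply Rmult_le_pos; [apply pow_le; apply Rlt_le; apply Rdiv_lt_0_compat; lra| apply Rabs_pos]. }
  assert (Hgp : forall k, 0 <= g k) by (intro k; unfold g; apply pow_le; lra).
  assert (Hex := ex_dist _ _ _ _ _ Ha Had Hg Hg1 Xa Xb).
  assert (HexR := ex_dist _ _ _ _ _ Ha Had Hg Hg1 XRa XRb).
  assert (HG : forall N, sum_f_R0 g N <= 1 / (1 - gamma)).
  { intro N. pose proof (GP_finite gamma N) as HP. fold g in HP.
    assert (0 < gamma ^ (N + 1)) by (apply pow_lt; lra).
    apply Rmult_le_reg_r with (1 - gamma); [lra|].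
    unfold Rdiv. rewrite Rmult_1_l, Rinv_l by lra. lra. }
  assert (HD : forall N, sum_f_R0 c N <= dist_gd gamma delta a b).
  { intro N. apply partial_le; auto. }
  assert (Hpart : forall N, sum_n (fun k => (gamma / delta) ^ k * Rabs (Ra1 a k - Ra1 b k)) N
      <= 2 * dist_gd gamma delta a b * (1 / (1 - gamma))).
  { intro N. rewrite sum_n_Reals.
    eapply Rle_trans.
    { apply sum_Rle. intros k _. exact (Ra_term_bound alpha delta gamma a b k Ha Had Hg Xa Xb). }
    rewrite plus_sum.
    pose proof (cauchy_le c g N Hc Hgp) as C1.
    pose proof (cauchy_le g c N Hgp Hc) as C2.
    fold c g.
    assert (E2 : sum_f_R0 (fun k => sum_f_R0 (fun n => g n * c (k - n)%nat) k) N =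
      sum_f_R0 (fun k => sum_f_R0 (fun n => gamma ^ n * ((gamma / delta) ^ (k - n) * Rabs (a (k - n)%nat - b (k - n)%nat))) k) N) by reflexivity.
    assert (E1 : sum_f_R0 (fun k => sum_f_R0 (fun n => c n * g (k - n)%nat) k) N =
      sum_f_R0 (fun k => sum_f_R0 (fun n => (gamma / delta) ^ n * Rabs (a n - b n) * gamma ^ (k - n)) k) N) by reflexivity.
    rewrite <- E1, <- E2.
    pose proof (HD N). pose proof (HG N).
    pose proof (cond_pos_sum c N Hc). pose proof (cond_pos_sum g N Hgp).
    assert (sum_f_R0 c N * sum_f_R0 g N <= dist_gd gamma delta a b * (1 / (1 - gamma))).
    { apply Rmult_le_compat; lra. }
    rewrite Rmult_comm in C2 at 1. lra. }
  apply Series_correct in HexR.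
  assert (Hl : is_lim_seq (sum_n (fun k => (gamma / delta) ^ k * Rabs (Ra1 a k - Ra1 b k)))
    (dist_gd gamma delta (Ra1 a) (Ra1 b))) by exact HexR.
  pose proof (is_lim_seq_le _ _ _ _ Hpart Hl (is_lim_seq_const _)) as H.
  simpl in H. exact H.
Qed.

Lemma Ra_X alpha delta a : 0 < alpha -> alpha <= delta -> X alpha delta a -> X alpha delta (Ra1 a).
Proof.
  intros Ha Had Xa.
  pose proof (X_bound _ _ _ Ha Had Xa) as B.
  destruct Xa as [H0 [H1 H2]].
  split; [|split].
  - unfold Ra1; simpl. rewrite H0. field.
  - unfold Ra1; simpl. rewrite H0, H1. field.
  - intros k Hk. unfold Ra1.
    assert (Hi : 0 < / (INR k + 1)) by (apply Rinv_0_lt_compat; pose proof (pos_INR k); lra).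
    split.
    + apply Rmult_le_pos; [lra|]. apply cond_pos_sum. intro n.
      apply Rmult_le_pos; apply B.
    + apply Rle_trans with (/ (INR k + 1) * sum_f_R0 (fun _ => delta ^ k) k).
      * apply Rmult_le_compat_l; [lra|]. apply sum_Rle. intros n Hn.
        replace (delta ^ k) with (delta ^ n * delta ^ (k - n)).
        2:{ rewrite <- pow_add. f_equal. lia. }
        apply Rmult_le_compat; try apply B.
      * rewrite sum_cte, S_INR. right. field. pose proof (pos_INR k); lra.
Qed.

Theorem lemma8 (alpha delta gamma : R)
  (Halpha : 0 < alpha) (Had : alpha <= delta)
  (Hg0 : 0 < gamma) (Hg1 : gamma < 1 / 3) :
  (forall a, X alpha delta a -> X alpha delta (Ra1 a)) /\
  (forall a, X alpha delta a ->
     forall eps, 0 < eps ->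
       exists eta, 0 < eta /\
         forall b, X alpha delta b ->
           dist_gd gamma delta a b < eta ->
           dist_gd gamma delta (Ra1 a) (Ra1 b) < eps).
Proof.
  split.
  - intros a Xa. apply Ra_X; auto.
  - intros a Xa eps Heps.
    exists (eps * (1 - gamma) / 2). split.
    + apply Rmult_lt_0_compat; [apply Rmult_lt_0_compat; lra| lra].
    + intros b Xb Hd.
      assert (Hg1' : gamma < 1) by lra.
      pose proof (dist_Ra_bound _ _ _ _ _ Halpha Had Hg0 Hg1' Xa Xb
        (Ra_X _ _ _ Halpha Had Xa) (Ra_X _ _ _ Halpha Had Xb)) as H.
      eapply Rle_lt_trans; [exact H|].
      apply Rmult_lt_reg_r with (1 - gamma); [lra|].
      unfold Rdiv. rewrite Rmult_assoc, Rmult_1_l, Rinv_l by lra.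
      unfold Rdiv in Hd. lra.
Qed.
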